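(* Fix an integer $n\ge1$. In the $q$-shuffle algebra $\mathbb V$ define the following sets, where $i,j\in\mathbb N$: $$N=\{\tilde G_i\star G_j: i+j=n\},\qquad S=\{G_i\star\tilde G_j: i+j=n\},$$ $$E=\{W_{i+1}\star W_{-j}: i+j=n-1\},\qquad W=\{W_{-i}\star W_{j+1}: i+j=n-1\}.$$ Then the sets $N\cup E$, $N\cup W$, $S\cup E$, $S\cup W$ all have the same linear span.
   Context: Let $\mathbb F$ be a field and let $q\in\mathbb F$ be nonzero and not a root of unity. Let $\mathbb V$ be the free associative $\mathbb F$-algebra on noncommuting $x,y$, with basis the words (including $1$). Juxtaposition denotes concatenation. Set $\langle x,x\rangle=\langle y,y\rangle=2$ and $\langle x,y\rangle=\langle y,x\rangle=-2$. The $q$-shuffle product $\star$ is the bilinear product determined as follows: - $1\star v=v\star 1=v$; - for nontrivial words $u=u_1\cdots u_r$ and $v=v_1\cdots v_s$, $$u\star v=u_1((u_2\cdots u_r)\star v)+v_1(u\star(v_2\cdots v_s))q^{\langle u_1,v_1\rangle+\cdots+\langle u_r,v_1\rangle}.$$ This makes $\mathbb V$ an associative algebra, the $q$-shuffle algebra. For $k\in\mathbb N$: - $W_{-k}=xyx\cdots x$ is the alternating word of length $2k+1$ beginning and ending with $x$; - $W_{k+1}=yxy\cdots y$ is the alternating word of length $2k+1$ beginning and ending with $y$; - $G_k=yxyx\cdots yx$ is the word of length $2k$; - $\tilde G_k=xyxy\cdots xy$ is the word of length $2k$; - $G_0=\tilde G_0=1$. *)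

(* Defs.v *)
From mathcomp Require Import all_boot all_order all_algebra.
Set Implicit Arguments. Unset Strict Implicit. Unset Printing Implicit Defensive.
Import Order.TTheory GRing.Theory Num.Theory.
Local Open Scope ring_scope.

Definition word := seq bool.
Definition lx : bool := true.
Definition ly : bool := false.

(* Elements of the free algebra V are given by their coefficient function
   on the basis of words. *)
Definition vec (F : fieldType) := word -> F.

Definition ip (a b : bool) : int := if a == b then 2%:R else - 2%:R.

Definition ipw (u : word) (b : bool) : int := \sum_(a <- u) ip a b.

(* Coefficient of the word w in the q-shuffle product u * v of words
   (recursion on w, following the defining recursion of the q-shuffle). *)
Fixpoint qsh (F : fieldType) (q : F) (u v w : word) {struct w} : F :=
  match u, v with
  | [::], _ => (w == v)%:R
  | _, [::] => (w == u)%:R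
  | a :: u', b :: v' =>
      match w with
      | [::] => 0
      | c :: w' => (c == a)%:R * qsh q u' v w'
                   + (c == b)%:R * q ^ (ipw u b) * qsh q u v' w'
      end
  end.

Fixpoint alt (a : bool) (m : nat) : word :=
  if m is m'.+1 then a :: alt (~~ a) m' else [::].

Definition Wneg (k : nat) : word := alt lx (2 * k).+1.   (* W_{-k}   *)
Definition Wpos (k : nat) : word := alt ly (2 * k).+1.   (* W_{k+1}  *)
Definition Gw (k : nat) : word := alt ly (2 * k).
Definition Gtw (k : nat) : word := alt lx (2 * k).

Definition Nset (F : fieldType) (q : F) (n : nat) : seq (vec F) :=
  [seq qsh q (Gtw i) (Gw (n - i)) | i <- iota 0 n.+1].
Definition Sset (F : fieldType) (q : F) (n : nat) : seq (vec F) :=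
  [seq qsh q (Gw i) (Gtw (n - i)) | i <- iota 0 n.+1].
Definition Eset (F : fieldType) (q : F) (n : nat) : seq (vec F) :=
  [seq qsh q (Wpos i) (Wneg (n.-1 - i)) | i <- iota 0 n].
Definition Wset (F : fieldType) (q : F) (n : nat) : seq (vec F) :=
  [seq qsh q (Wneg i) (Wpos (n.-1 - i)) | i <- iota 0 n].

Definition in_span (F : fieldType) (L : seq (vec F)) (f : vec F) : Prop :=
  exists c : nat -> F,
    forall w, f w = \sum_(i < size L) c i * nth (fun _ => 0) L i w.

Definition same_span (F : fieldType) (L1 L2 : seq (vec F)) : Prop :=
  forall f : vec F, in_span L1 f <-> in_span L2 f.

(* Main.v *)
Require Import Defs.
From mathcomp Require Import all_boot all_order all_algebra.
From mathcomp Require Import ring zify.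
Import GRing.Theory.
Local Open Scope ring_scope.
Set Implicit Arguments. Unset Strict Implicit. Unset Printing Implicit Defensive.

Lemma qsh_nil_l (F : fieldType) (q : F) v w : qsh q [::] v w = (w == v)%:R.
Proof. by case: w. Qed.

Lemma qsh_nil_r (F : fieldType) (q : F) u w : qsh q u [::] w = (w == u)%:R.
Proof. by case: u => [|a u]; case: w. Qed.

Lemma ipw_nil b : ipw [::] b = 0.
Proof. by rewrite /ipw big_nil. Qed.

Lemma ipw_cons a u b : ipw (a :: u) b = ip a b + ipw u b.
Proof. by rewrite /ipw big_cons. Qed.

Lemma qsh_cons (F : fieldType) (q : F) u v c w :
  qsh q u v (c :: w) =
  (if u is a :: u' then (c == a)%:R * qsh q u' v w else 0) +
  (if v is b :: v' then (c == b)%:R * q ^ (ipw u b) * qsh q u v' w else 0).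
Proof.
case: u => [|a u]; case: v => [|b v] //=.
- by rewrite add0r.
- rewrite add0r ipw_nil expr0z mulr1 qsh_nil_l eqseq_cons.
  by case: (c == b); rewrite ?mul1r ?mul0r.
- rewrite addr0 qsh_nil_r eqseq_cons.
  by case: (c == a); rewrite ?mul1r ?mul0r.
Qed.

Lemma WnegE k : Wneg k = true :: Gw k. Proof. by []. Qed.
Lemma WposE k : Wpos k = false :: Gtw k. Proof. by []. Qed.
Lemma Gw0 : Gw 0 = [::]. Proof. by []. Qed.
Lemma Gtw0 : Gtw 0 = [::]. Proof. by []. Qed.
Lemma GwS k : Gw k.+1 = false :: Wneg k. Proof. by rewrite /Gw /Wneg mulnS. Qed.
Lemma GtwS k : Gtw k.+1 = true :: Wpos k. Proof. by rewrite /Gtw /Wpos mulnS. Qed.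

Lemma ipwG k b : ipw (Gw k) b = 0.
Proof.
elim: k b => [|k IH] b; first by rewrite Gw0 ipw_nil.
by rewrite GwS WnegE !ipw_cons IH addr0; case: b.
Qed.
Lemma ipwT k b : ipw (Gtw k) b = 0.
Proof.
elim: k b => [|k IH] b; first by rewrite Gtw0 ipw_nil.
by rewrite GtwS WposE !ipw_cons IH addr0; case: b.
Qed.
Lemma ipwM k b : ipw (Wneg k) b = ip true b.
Proof. by rewrite WnegE ipw_cons ipwG addr0. Qed.
Lemma ipwP k b : ipw (Wpos k) b = ip false b.
Proof. by rewrite WposE ipw_cons ipwT addr0. Qed.

Definition oW (f : nat -> word) (i : int) : option word :=
  match i with Posz k => Some (f k) | Negz _ => None end.

Definition pr (F : fieldType) (q : F) (o1 o2 : option word) (w : word) : F :=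
  match o1, o2 with Some u, Some v => qsh q u v w | _, _ => 0 end.

Lemma predS (i : nat) : (Posz i.+1 - 1 = Posz i)%R.
Proof. by rewrite -addn1 PoszD addrK. Qed.
Lemma pred0 : (Posz 0 - 1 = Negz 0)%R.
Proof. by []. Qed.

Lemma oW_pred f (a : int) :
  oW f (a - 1) = match a with Posz (k.+1) => Some (f k) | _ => None end.
Proof. case: a => [[|k]|k]; rewrite ?predS //. Qed.

Lemma ipw1 k b : ipw (true :: Gw k) b = ip true b.
Proof. by rewrite -WnegE ipwM. Qed.
Lemma ipw2 k b : ipw (false :: Gtw k) b = ip false b.
Proof. by rewrite -WposE ipwP. Qed.
Lemma ipw3 k b : ipw (false :: true :: Gw k) b = 0.
Proof. by rewrite -WnegE -GwS ipwG. Qed.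
Lemma ipw4 k b : ipw (true :: false :: Gtw k) b = 0.
Proof. by rewrite -WposE -GtwS ipwT. Qed.
Lemma qip1 (F : fieldType) (q : F) : q ^ (ip true true) = q ^+ 2. Proof. by []. Qed.
Lemma qip2 (F : fieldType) (q : F) : q ^ (ip false false) = q ^+ 2. Proof. by []. Qed.
Lemma qip3 (F : fieldType) (q : F) : q ^ (ip true false) = q ^- 2. Proof. by []. Qed.
Lemma qip4 (F : fieldType) (q : F) : q ^ (ip false true) = q ^- 2. Proof. by []. Qed.

Notation M := (oW Wneg).
Notation P := (oW Wpos).
Notation G := (oW Gw).
Notation T := (oW Gtw).

Ltac dsolve a b :=
  let i := fresh "i" in let j := fresh "j" in
  rewrite ?oW_pred;
  case: a => [[|i]|i]; case: b => [[|j]|j];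
  rewrite /pr /oW ?Gw0 ?Gtw0 ?GwS ?GtwS ?WnegE ?WposE ?qsh_cons
     ?ipw1 ?ipw2 ?ipw3 ?ipw4 ?ipw_nil ?qip1 ?qip2 ?qip3 ?qip4 ?expr0z /= -?WnegE -?WposE -?GwS -?GtwS;
  rewrite ?mul1r ?mul0r ?mulr0 ?add0r ?addr0 ?expr0z ?mulr1 //.

Lemma dMP_x (F : fieldType) (q : F) a b w :
  pr q (M a) (P b) (true :: w) = pr q (G a) (P b) w.
Proof. dsolve a b; try reflexivity. Qed.

Lemma dPM_x (F : fieldType) (q : F) a b w :
  pr q (P a) (M b) (true :: w) = q ^- 2 * pr q (P a) (G b) w.
Proof. dsolve a b; try reflexivity. Qed.

Lemma dTG_x (F : fieldType) (q : F) a b w :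
  pr q (T a) (G b) (true :: w) = pr q (P (a - 1)) (G b) w.
Proof. dsolve a b; try reflexivity. Qed.

Lemma dGT_x (F : fieldType) (q : F) a b w :
  pr q (G a) (T b) (true :: w) = pr q (G a) (P (b - 1)) w.
Proof. dsolve a b; try reflexivity. Qed.

Lemma dGP_x (F : fieldType) (q : F) a b w :
  pr q (G a) (P b) (true :: w) = 0.
Proof. dsolve a b; try reflexivity. Qed.

Lemma dPG_x (F : fieldType) (q : F) a b w :
  pr q (P a) (G b) (true :: w) = 0.
Proof. dsolve a b; try reflexivity. Qed.

Lemma dMT_x (F : fieldType) (q : F) a b w :
  pr q (M a) (T b) (true :: w) = pr q (G a) (T b) w + q ^+ 2 * pr q (M a) (P (b - 1)) w.
Proof. dsolve a b; try reflexivity. Qed.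

Lemma dTM_x (F : fieldType) (q : F) a b w :
  pr q (T a) (M b) (true :: w) = pr q (P (a - 1)) (M b) w + pr q (T a) (G b) w.
Proof. dsolve a b; try reflexivity. Qed.

Lemma dMP_y (F : fieldType) (q : F) a b w :
  pr q (M a) (P b) (false :: w) = q ^- 2 * pr q (M a) (T b) w.
Proof. dsolve a b; try reflexivity. Qed.

Lemma dPM_y (F : fieldType) (q : F) a b w :
  pr q (P a) (M b) (false :: w) = pr q (T a) (M b) w.
Proof. dsolve a b; try reflexivity. Qed.

Lemma dTG_y (F : fieldType) (q : F) a b w :
  pr q (T a) (G b) (false :: w) = pr q (T a) (M (b - 1)) w.
Proof. dsolve a b; try reflexivity. Qed.

Lemma dGT_y (F : fieldType) (q : F) a b w :
  pr q (G a) (T b) (false :: w) = pr q (M (a - 1)) (T b) w.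
Proof. dsolve a b; try reflexivity. Qed.

Lemma dGP_y (F : fieldType) (q : F) a b w :
  pr q (G a) (P b) (false :: w) = pr q (M (a - 1)) (P b) w + pr q (G a) (T b) w.
Proof. dsolve a b; try reflexivity. Qed.

Lemma dPG_y (F : fieldType) (q : F) a b w :
  pr q (P a) (G b) (false :: w) = pr q (T a) (G b) w + q ^+ 2 * pr q (P a) (M (b - 1)) w.
Proof. dsolve a b; try reflexivity. Qed.

Lemma dMT_y (F : fieldType) (q : F) a b w :
  pr q (M a) (T b) (false :: w) = 0.
Proof. dsolve a b; try reflexivity. Qed.

Lemma dTM_y (F : fieldType) (q : F) a b w :
  pr q (T a) (M b) (false :: w) = 0.
Proof. dsolve a b; try reflexivity. Qed.

Lemma pr_nilM1 (F : fieldType) (q : F) a o : pr q (M a) o [::] = 0.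
Proof. by case: a => [k|k] //; case: o => [[|b v]|]. Qed.
Lemma pr_nilM2 (F : fieldType) (q : F) a o : pr q o (M a) [::] = 0.
Proof. by case: a => [k|k] //; case: o => [[|b v]|]. Qed.
Lemma pr_nilP1 (F : fieldType) (q : F) a o : pr q (P a) o [::] = 0.
Proof. by case: a => [k|k] //; case: o => [[|b v]|]. Qed.
Lemma pr_nilP2 (F : fieldType) (q : F) a o : pr q o (P a) [::] = 0.
Proof. by case: a => [k|k] //; case: o => [[|b v]|]. Qed.

Definition isnil (o : option word) : bool := o == Some [::].

Lemma pr_nil (F : fieldType) (q : F) o1 o2 :
  pr q o1 o2 [::] = (isnil o1)%:R * (isnil o2)%:R.
Proof.
case: o1 => [[|a u]|]; case: o2 => [[|b v]|] //=; rewrite /isnil /= ?mul0r ?mulr0 ?mul1r //.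
Qed.

Definition R1 (F : fieldType) (q : F) a b w :=
  pr q (M (a-1)) (P b) w - pr q (P b) (M (a-1)) w
  - (pr q (M a) (P (b-1)) w - pr q (P (b-1)) (M a) w)
  - (1 - q ^- 2) * (pr q (T a) (G b) w - pr q (T b) (G a) w).
Definition R2 (F : fieldType) (q : F) a b w :=
  pr q (G (a-1)) (P b) w - q ^- 2 * pr q (P b) (G (a-1)) w
  - pr q (G a) (P (b-1)) w + q ^- 2 * pr q (P (b-1)) (G a) w
  - (1 - q ^- 2) * (pr q (P (a-1)) (G b) w - pr q (P (b-1)) (G a) w).
Definition R3 (F : fieldType) (q : F) a b w :=
  q ^- 2 * pr q (M (a-1)) (T b) w - pr q (T b) (M (a-1)) w
  - q ^- 2 * pr q (M a) (T (b-1)) w + pr q (T (b-1)) (M a) w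
  - (1 - q ^- 2) * (pr q (T a) (M (b-1)) w - pr q (T b) (M (a-1)) w).
Definition R4 (F : fieldType) (q : F) a b w :=
  pr q (G (a-1)) (T b) w - pr q (T b) (G (a-1)) w
  - (pr q (G a) (T (b-1)) w - pr q (T (b-1)) (G a) w)
  - (q ^+ 2 - 1) * (pr q (P (a-1)) (M (b-1)) w - pr q (P (b-1)) (M (a-1)) w).

Ltac dall := rewrite ?dMP_x ?dPM_x ?dTG_x ?dGT_x ?dGP_x ?dPG_x ?dMT_x ?dTM_x
  ?dMP_y ?dPM_y ?dTG_y ?dGT_y ?dGP_y ?dPG_y ?dMT_y ?dTM_y.

Lemma R1x (F : fieldType) (q : F) a b w : q != 0 -> R1 q a b (true :: w) = R2 q a b w.
Proof. move=> hq; rewrite /R1 /R2; dall; field. all: exact hq. Qed.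
Lemma R1y (F : fieldType) (q : F) a b w : q != 0 -> R1 q a b (false :: w) = R3 q a b w.
Proof. move=> hq; rewrite /R1 /R3; dall; field. all: exact hq. Qed.
Lemma R2x (F : fieldType) (q : F) a b w : q != 0 -> R2 q a b (true :: w) = 0.
Proof. move=> hq; rewrite /R2; dall; field. all: exact hq. Qed.
Lemma R2y (F : fieldType) (q : F) a b w : q != 0 ->
  R2 q a b (false :: w) = R4 q a b w + R1 q (a-1) b w.
Proof. move=> hq; rewrite /R2 /R4 /R1; dall; field. all: exact hq. Qed.
Lemma R3x (F : fieldType) (q : F) a b w : q != 0 ->
  R3 q a b (true :: w) = q ^- 2 * R4 q a b w + R1 q a (b-1) w.
Proof. move=> hq; rewrite /R3 /R4 /R1; dall; field. all: exact hq. Qed.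
Lemma R3y (F : fieldType) (q : F) a b w : q != 0 -> R3 q a b (false :: w) = 0.
Proof. move=> hq; rewrite /R3; dall; field. all: exact hq. Qed.
Lemma R4x (F : fieldType) (q : F) a b w : q != 0 ->
  R4 q a b (true :: w) = R2 q a (b-1) w.
Proof. move=> hq; rewrite /R4 /R2; dall; field. all: exact hq. Qed.
Lemma R4y (F : fieldType) (q : F) a b w : q != 0 ->
  R4 q a b (false :: w) = q ^+ 2 * R3 q (a-1) b w.
Proof. move=> hq; rewrite /R4 /R3; dall; field. all: exact hq. Qed.

Lemma fr0 (F : fieldType) : (false%:R : F) = 0. Proof. by []. Qed.

Lemma isnilM a : isnil (M a) = false. Proof. by case: a. Qed.
Lemma isnilP a : isnil (P a) = false. Proof. by case: a. Qed.
Lemma isnilG a : isnil (G a) = isnil (T a).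
Proof. by case: a => [[|k]|k] //; rewrite /isnil /= GwS GtwS. Qed.

Lemma Rall (F : fieldType) (q : F) : q != 0 -> forall w a b,
  [/\ R1 q a b w = 0, R2 q a b w = 0, R3 q a b w = 0 & R4 q a b w = 0].
Proof.
move=> hq; elim=> [|c w IH] a b.
  rewrite /R1 /R2 /R3 /R4 !pr_nil !isnilM !isnilP !isnilG.
  rewrite !fr0; split; ring.
case: c.
  rewrite R1x // R2x // R3x // R4x //.
  have [_ h2 _ _] := IH a b; have [_ _ _ h4] := IH a b;
  have [h1 _ _ _] := IH a (b-1); have [_ h2' _ _] := IH a (b-1).
  by rewrite h2 h4 h1 h2' mulr0 addr0.
rewrite R1y // R2y // R3y // R4y //.
have [_ _ h3 h4] := IH a b; have [h1 _ h3' _] := IH (a-1) b.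
by rewrite h3 h4 h1 h3' mulr0 addr0.
Qed.

Lemma relC1 (F : fieldType) (q : F) (hq : q != 0) i j w :
  qsh q (Wneg i) (Wpos j.+1) w - qsh q (Wpos j.+1) (Wneg i) w
  - (qsh q (Wneg i.+1) (Wpos j) w - qsh q (Wpos j) (Wneg i.+1) w)
  = (1 - q ^- 2) * (qsh q (Gtw i.+1) (Gw j.+1) w - qsh q (Gtw j.+1) (Gw i.+1) w).
Proof.
have [h _ _ _] := Rall hq w (Posz i.+1) (Posz j.+1).
by move: h; rewrite /R1 !predS /= => /subr0_eq.
Qed.

Lemma relC0 (F : fieldType) (q : F) (hq : q != 0) j w :
  qsh q (Wneg 0) (Wpos j) w - qsh q (Wpos j) (Wneg 0) w
  = - ((1 - q ^- 2) * (qsh q (Gtw 0) (Gw j.+1) w - qsh q (Gtw j.+1) (Gw 0) w)).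
Proof.
have [h _ _ _] := Rall hq w (Posz 0) (Posz j.+1).
move: h; rewrite /R1 pred0 !predS /= subrr sub0r => /subr0_eq <-.
by rewrite opprK.
Qed.

Lemma relC0' (F : fieldType) (q : F) (hq : q != 0) j w :
  qsh q (Wneg j) (Wpos 0) w - qsh q (Wpos 0) (Wneg j) w
  = (1 - q ^- 2) * (qsh q (Gtw j.+1) (Gw 0) w - qsh q (Gtw 0) (Gw j.+1) w).
Proof.
have [h _ _ _] := Rall hq w (Posz j.+1) (Posz 0).
by move: h; rewrite /R1 pred0 !predS /= subrr subr0 => /subr0_eq.
Qed.

Lemma relD (F : fieldType) (q : F) (hq : q != 0) i j w :
  qsh q (Gw i) (Gtw j.+1) w - qsh q (Gtw j.+1) (Gw i) w
  - (qsh q (Gw i.+1) (Gtw j) w - qsh q (Gtw j) (Gw i.+1) w)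
  = (q ^+ 2 - 1) * (qsh q (Wpos i) (Wneg j) w - qsh q (Wpos j) (Wneg i) w).
Proof.
have [_ _ _ h] := Rall hq w (Posz i.+1) (Posz j.+1).
by move: h; rewrite /R4 !predS /= => /subr0_eq.
Qed.

Lemma relY (F : fieldType) (q : F) (hq : q != 0) i j w :
  qsh q (Wneg i) (Wpos j) w - qsh q (Wpos j) (Wneg i) w
  = qsh q (Wneg j) (Wpos i) w - qsh q (Wpos i) (Wneg j) w.
Proof.
elim: i j => [|i IH] j.
  by rewrite relC0 // relC0' // -mulrN opprB.
have h1 := relC1 hq i j w; have h2 := relC1 hq j i w.
have h3 := IH j.+1.
move: h1 h2 h3.
set a1 := qsh q (Wneg i) (Wpos j.+1) w; set a2 := qsh q (Wpos j.+1) (Wneg i) w.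
set b1 := qsh q (Wneg i.+1) (Wpos j) w; set b2 := qsh q (Wpos j) (Wneg i.+1) w.
set c1 := qsh q (Wneg j) (Wpos i.+1) w; set c2 := qsh q (Wpos i.+1) (Wneg j) w.
set d1 := qsh q (Wneg j.+1) (Wpos i) w; set d2 := qsh q (Wpos i) (Wneg j.+1) w.
set x1 := qsh q (Gtw i.+1) (Gw j.+1) w; set x2 := qsh q (Gtw j.+1) (Gw i.+1) w.
set al := 1 - q ^- 2.
move=> h1 h2 h3.
have e1 : b1 = b2 + a1 - a2 - al * (x1 - x2) by rewrite -h1; ring.
have e2 : c1 = c2 + d1 - d2 + al * (x2 - x1) by rewrite -h2; ring.
have e3 : a1 = a2 + (d1 - d2) by rewrite -h3; ring.
rewrite e1 e2 e3; ring.
Qed.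

Notation nthv L i := (nth (fun _ => 0) L i).

Lemma span_ext (F : fieldType) (L : seq (vec F)) f g :
  in_span L f -> (forall w, g w = f w) -> in_span L g.
Proof. by move=> [c hc] e; exists c => w; rewrite e hc. Qed.

Lemma span0 (F : fieldType) (L : seq (vec F)) : in_span L (fun _ => 0).
Proof. by exists (fun _ => 0) => w; rewrite big1 // => i _; rewrite mul0r. Qed.

Lemma spanD (F : fieldType) (L : seq (vec F)) f g :
  in_span L f -> in_span L g -> in_span L (fun w => f w + g w).
Proof.
move=> [c hc] [d hd]; exists (fun i => c i + d i) => w.
by rewrite hc hd -big_split /=; apply: eq_bigr => i _; rewrite mulrDl.
Qed.

Lemma spanZ (F : fieldType) (L : seq (vec F)) k f :
  in_span L f -> in_span L (fun w => k * f w).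
Proof.
move=> [c hc]; exists (fun i => k * c i) => w.
by rewrite hc mulr_sumr; apply: eq_bigr => i _; rewrite mulrA.
Qed.

Lemma spanB (F : fieldType) (L : seq (vec F)) f g :
  in_span L f -> in_span L g -> in_span L (fun w => f w - g w).
Proof.
move=> hf hg; apply: (span_ext (spanD hf (spanZ (-1) hg))) => w.
by rewrite mulN1r.
Qed.

Lemma span_nth (F : fieldType) (L : seq (vec F)) i :
  (i < size L)%N -> in_span L (nthv L i).
Proof.
move=> hi; exists (fun j => (j == i)%:R) => w.
rewrite (bigD1 (Ordinal hi)) //= eqxx mul1r big1 ?addr0 // => j hj.
suff -> : (nat_of_ord j == i) = false by rewrite mul0r.
by apply/negbTE; move: hj; apply: contra => /eqP e; apply/eqP/val_inj.
Qed.

Lemma span_trans (F : fieldType) (L1 L2 : seq (vec F)) f :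
  (forall i, (i < size L2)%N -> in_span L1 (nthv L2 i)) ->
  in_span L2 f -> in_span L1 f.
Proof.
move=> h [c hc].
suff H : forall m, (m <= size L2)%N ->
  in_span L1 (fun w => \sum_(0 <= i < m) c i * nthv L2 i w).
  by apply: (span_ext (H _ (leqnn _))) => w; rewrite hc big_mkord.
elim=> [|m IH] hm.
  by apply: (span_ext (span0 L1)) => w; rewrite big_nil.
apply: (span_ext (spanD (IH (ltnW hm)) (spanZ (c m) (h m hm)))) => w.
by rewrite big_nat_recr.
Qed.

Lemma same_span_of (F : fieldType) (L1 L2 : seq (vec F)) :
  (forall i, (i < size L2)%N -> in_span L1 (nthv L2 i)) ->
  (forall i, (i < size L1)%N -> in_span L2 (nthv L1 i)) ->
  same_span L1 L2.
Proof. by move=> h1 h2 f; split; apply: span_trans. Qed.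

Lemma cat_all (F : fieldType) (A B : seq (vec F)) (Q : vec F -> Prop) :
  (forall i, (i < size A)%N -> Q (nthv A i)) ->
  (forall i, (i < size B)%N -> Q (nthv B i)) ->
  forall i, (i < size (A ++ B))%N -> Q (nthv (A ++ B) i).
Proof.
move=> hA hB i; rewrite size_cat nth_cat.
case: (ltnP i (size A)) => hi hs; first exact: hA.
by apply: hB; rewrite ltn_subLR.
Qed.

Lemma span_catl (F : fieldType) (A B : seq (vec F)) i :
  (i < size A)%N -> in_span (A ++ B) (nthv A i).
Proof.
move=> hi; have := @span_nth _ (A ++ B) i; rewrite nth_cat hi size_cat; apply.
exact: ltn_addr.
Qed.

Lemma span_catr (F : fieldType) (A B : seq (vec F)) i :
  (i < size B)%N -> in_span (A ++ B) (nthv B i).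
Proof.
move=> hi; have := @span_nth _ (A ++ B) (size A + i); rewrite nth_cat size_cat.
have -> : (size A + i < size A)%N = false by rewrite ltnNge leq_addr.
rewrite addKn; apply; by rewrite ltn_add2l.
Qed.


Lemma span_liftl (F : fieldType) (A B : seq (vec F)) f :
  in_span A f -> in_span (A ++ B) f.
Proof. by apply: span_trans => i; apply: span_catl. Qed.
Lemma span_liftr (F : fieldType) (A B : seq (vec F)) f :
  in_span B f -> in_span (A ++ B) f.
Proof. by apply: span_trans => i; apply: span_catr. Qed.

Lemma sizeN (F : fieldType) (q : F) n : size (Nset q n) = n.+1.
Proof. by rewrite /Nset size_map size_iota. Qed.
Lemma sizeS (F : fieldType) (q : F) n : size (Sset q n) = n.+1.
Proof. by rewrite /Sset size_map size_iota. Qed.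
Lemma sizeE (F : fieldType) (q : F) n : size (Eset q n) = n.
Proof. by rewrite /Eset size_map size_iota. Qed.
Lemma sizeW (F : fieldType) (q : F) n : size (Wset q n) = n.
Proof. by rewrite /Wset size_map size_iota. Qed.

Lemma nthN (F : fieldType) (q : F) n i : (i < n.+1)%N ->
  nthv (Nset q n) i = qsh q (Gtw i) (Gw (n - i)).
Proof. by move=> hi; rewrite /Nset (nth_map 0%N) ?size_iota // nth_iota. Qed.
Lemma nthS (F : fieldType) (q : F) n i : (i < n.+1)%N ->
  nthv (Sset q n) i = qsh q (Gw i) (Gtw (n - i)).
Proof. by move=> hi; rewrite /Sset (nth_map 0%N) ?size_iota // nth_iota. Qed.
Lemma nthE (F : fieldType) (q : F) n i : (i < n)%N ->
  nthv (Eset q n) i = qsh q (Wpos i) (Wneg (n.-1 - i)).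
Proof. by move=> hi; rewrite /Eset (nth_map 0%N) ?size_iota // nth_iota. Qed.
Lemma nthW (F : fieldType) (q : F) n i : (i < n)%N ->
  nthv (Wset q n) i = qsh q (Wneg i) (Wpos (n.-1 - i)).
Proof. by move=> hi; rewrite /Wset (nth_map 0%N) ?size_iota // nth_iota. Qed.

Lemma inN (F : fieldType) (q : F) n i j : (i + j = n)%N ->
  in_span (Nset q n) (qsh q (Gtw i) (Gw j)).
Proof.
move=> e; have hi : (i < n.+1)%N by lia.
have := @span_nth _ (Nset q n) i; rewrite sizeN nthN // => /(_ hi).
by rewrite (_ : n - i = j)%N //; lia.
Qed.
Lemma inS (F : fieldType) (q : F) n i j : (i + j = n)%N ->
  in_span (Sset q n) (qsh q (Gw i) (Gtw j)).
Proof.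
move=> e; have hi : (i < n.+1)%N by lia.
have := @span_nth _ (Sset q n) i; rewrite sizeS nthS // => /(_ hi).
by rewrite (_ : n - i = j)%N //; lia.
Qed.
Lemma inE (F : fieldType) (q : F) m i j : (i + j = m)%N ->
  in_span (Eset q m.+1) (qsh q (Wpos i) (Wneg j)).
Proof.
move=> e; have hi : (i < m.+1)%N by lia.
have := @span_nth _ (Eset q m.+1) i; rewrite sizeE nthE // => /(_ hi).
by rewrite (_ : m.+1.-1 - i = j)%N //; lia.
Qed.
Lemma inW (F : fieldType) (q : F) m i j : (i + j = m)%N ->
  in_span (Wset q m.+1) (qsh q (Wneg i) (Wpos j)).
Proof.
move=> e; have hi : (i < m.+1)%N by lia.
have := @span_nth _ (Wset q m.+1) i; rewrite sizeW nthW // => /(_ hi).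
by rewrite (_ : m.+1.-1 - i = j)%N //; lia.
Qed.

Lemma Cspan (F : fieldType) (q : F) (hq : q != 0) m k : (k <= m)%N ->
  in_span (Nset q m.+1)
    (fun w => qsh q (Wneg k) (Wpos (m - k)) w - qsh q (Wpos (m - k)) (Wneg k) w).
Proof.
elim: k => [|k IH] hk.
  apply: (span_ext (spanZ (-(1 - q ^- 2))
     (spanB (@inN _ q m.+1 0 m.+1 erefl) (@inN _ q m.+1 m.+1 0 (addn0 _))))) => w.
  by rewrite subn0 relC0 // mulNr.
have e : (m - k.+1).+1 = (m - k)%N by lia.
apply: (span_ext (spanB (IH (ltnW hk)) (spanZ (1 - q ^- 2)
   (spanB (@inN _ q m.+1 k.+1 (m - k) _) (@inN _ q m.+1 (m - k) k.+1 _))))); try lia.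
move=> w; have := relC1 hq k (m - k.+1) w; rewrite e => h.
rewrite -h; ring.
Qed.

Lemma D0 (F : fieldType) (q : F) n w :
  qsh q (Gw 0) (Gtw n) w - qsh q (Gtw n) (Gw 0) w = 0.
Proof. by rewrite Gw0 qsh_nil_l qsh_nil_r subrr. Qed.

Lemma DspanE (F : fieldType) (q : F) (hq : q != 0) m i : (i <= m.+1)%N ->
  in_span (Eset q m.+1)
    (fun w => qsh q (Gw i) (Gtw (m.+1 - i)) w - qsh q (Gtw (m.+1 - i)) (Gw i) w).
Proof.
elim: i => [|i IH] hi.
  by apply: (span_ext (span0 _)) => w; rewrite D0.
have e : (m.+1 - i.+1).+1 = (m.+1 - i)%N by lia.
apply: (span_ext (spanB (IH (ltnW hi)) (spanZ (q ^+ 2 - 1)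
   (spanB (@inE _ q m i (m - i) _) (@inE _ q m (m - i) i _))))); try lia.
move=> w; have := relD hq i (m.+1 - i.+1) w; rewrite e => h.
rewrite (_ : (m.+1 - i.+1 = m - i)%N) in h; last by lia.
rewrite -h; ring.
Qed.

Lemma DspanW (F : fieldType) (q : F) (hq : q != 0) m i : (i <= m.+1)%N ->
  in_span (Wset q m.+1)
    (fun w => qsh q (Gw i) (Gtw (m.+1 - i)) w - qsh q (Gtw (m.+1 - i)) (Gw i) w).
Proof.
elim: i => [|i IH] hi.
  by apply: (span_ext (span0 _)) => w; rewrite D0.
have e : (m.+1 - i.+1).+1 = (m.+1 - i)%N by lia.
apply: (span_ext (spanB (IH (ltnW hi)) (spanZ (q ^+ 2 - 1)
   (spanB (@inW _ q m (m - i) i _) (@inW _ q m i (m - i) _))))); try lia.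
move=> w; have := relD hq i (m.+1 - i.+1) w; rewrite e => h.
rewrite (_ : (m.+1 - i.+1 = m - i)%N) in h; last by lia.
have hy := relY hq i (m - i) w.
have : qsh q (Wpos i) (Wneg (m - i)) w - qsh q (Wpos (m - i)) (Wneg i) w
  = qsh q (Wneg (m - i)) (Wpos i) w - qsh q (Wneg i) (Wpos (m - i)) w.
  by move/eqP: hy; rewrite -subr_eq0 => /eqP hy; apply/eqP; rewrite -subr_eq0;
     apply/eqP; rewrite -hy; ring.
move=> hy'; rewrite hy' in h.
rewrite -h; ring.
Qed.

Lemma Wk_NE (F : fieldType) (q : F) (hq : q != 0) m k : (k < m.+1)%N ->
  in_span (Nset q m.+1 ++ Eset q m.+1) (qsh q (Wneg k) (Wpos (m - k))).
Proof.
move=> hk.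
apply: (span_ext (spanD (span_liftr _ (@inE _ q m (m - k) k _))
                        (span_liftl _ (Cspan hq (k := k) _)))); try lia.
by move=> w; rewrite addrC subrK.
Qed.

Lemma Ek_N (F : fieldType) (q : F) (hq : q != 0) m k (L : seq (vec F)) :
  (k < m.+1)%N ->
  (forall i, (i < m.+2)%N -> in_span L (nthv (Nset q m.+1) i)) ->
  in_span L (qsh q (Wneg (m - k)) (Wpos k)) ->
  in_span L (qsh q (Wpos k) (Wneg (m - k))).
Proof.
move=> hk hN hW.
have hC := Cspan hq (k := m - k) (leq_subr _ _).
rewrite subKn in hC; last by lia.
have hC' : in_span L
   (fun w => qsh q (Wneg (m - k)) (Wpos k) w - qsh q (Wpos k) (Wneg (m - k)) w).
  by apply: span_trans hC => i; rewrite sizeN; apply: hN.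
apply: (span_ext (spanB hW hC')) => w.
by rewrite opprB addrC subrK.
Qed.

Lemma Si_NE (F : fieldType) (q : F) (hq : q != 0) m i : (i < m.+2)%N ->
  in_span (Nset q m.+1 ++ Eset q m.+1) (qsh q (Gw i) (Gtw (m.+1 - i))).
Proof.
move=> hi.
apply: (span_ext (spanD (span_liftl _ (@inN _ q m.+1 (m.+1 - i) i _))
                        (span_liftr _ (DspanE hq (i := i) _)))); try lia.
by move=> w; rewrite addrC subrK.
Qed.

Lemma Ni_S (F : fieldType) (q : F) m i (X : seq (vec F)) : (i < m.+2)%N ->
  (forall j, (j <= m.+1)%N -> in_span X
    (fun w => qsh q (Gw j) (Gtw (m.+1 - j)) w - qsh q (Gtw (m.+1 - j)) (Gw j) w)) ->
  in_span (Sset q m.+1 ++ X) (qsh q (Gtw i) (Gw (m.+1 - i))).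
Proof.
move=> hi hD.
have h := hD (m.+1 - i)%N (leq_subr _ _).
rewrite subKn in h; last by lia.
apply: (span_ext (spanB (span_liftl _ (@inS _ q m.+1 (m.+1 - i) i _))
                        (span_liftr _ h))); first lia.
by move=> w; rewrite opprB addrC subrK.
Qed.

Theorem proposition7p2 (F : fieldType) (q : F) (n : nat)
  (hq0 : q != 0) (hq : forall m : nat, (0 < m)%N -> q ^+ m != 1)
  (hn : (1 <= n)%N) :
  let NE := Nset q n ++ Eset q n in
  let NW := Nset q n ++ Wset q n in
  let SE := Sset q n ++ Eset q n in
  let SW := Sset q n ++ Wset q n in
  [/\ same_span NE NW, same_span NE SE & same_span NE SW].
Proof.
case: n hn => // m _ NE NW SE SW; rewrite {}/NE {}/NW {}/SE {}/SW.
have NinNX X i : (i < size (Nset q m.+1))%N ->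
    in_span (Nset q m.+1 ++ X) (nthv (Nset q m.+1) i) by apply: span_catl.
have WinNE i : (i < size (Wset q m.+1))%N ->
    in_span (Nset q m.+1 ++ Eset q m.+1) (nthv (Wset q m.+1) i).
  by rewrite sizeW => hi; rewrite nthW //=; apply: Wk_NE.
have SinNE i : (i < size (Sset q m.+1))%N ->
    in_span (Nset q m.+1 ++ Eset q m.+1) (nthv (Sset q m.+1) i).
  by rewrite sizeS => hi; rewrite nthS //; apply: Si_NE.
have NinSE i : (i < size (Nset q m.+1))%N ->
    in_span (Sset q m.+1 ++ Eset q m.+1) (nthv (Nset q m.+1) i).
  by rewrite sizeN => hi; rewrite nthN //; apply: Ni_S => // j hj; apply: DspanE.
have NinSW i : (i < size (Nset q m.+1))%N ->
    in_span (Sset q m.+1 ++ Wset q m.+1) (nthv (Nset q m.+1) i).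
  by rewrite sizeN => hi; rewrite nthN //; apply: Ni_S => // j hj; apply: DspanW.
have EinX X i : (forall j, (j < m.+2)%N -> in_span X (nthv (Nset q m.+1) j)) ->
    (forall k, (k < m.+1)%N -> in_span X (qsh q (Wneg k) (Wpos (m - k)))) ->
    (i < size (Eset q m.+1))%N -> in_span X (nthv (Eset q m.+1) i).
  move=> hN hW; rewrite sizeE => hi; rewrite nthE //=.
  apply: Ek_N => //; have h := hW (m - i)%N; rewrite subKn in h; [apply: h; lia | lia].
split; apply: same_span_of; apply: cat_all => i hi.
- exact: NinNX.
- exact: WinNE.
- exact: NinNX.
- apply: EinX hi => [j hj|k hk].
    by apply: NinNX; rewrite sizeN.
  have := @span_catr _ (Nset q m.+1) (Wset q m.+1) k; rewrite sizeW nthW //=; apply => //.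
- exact: SinNE.
- exact: span_catr.
- exact: NinSE.
- exact: span_catr.
- exact: SinNE.
- exact: WinNE.
- exact: NinSW.
- apply: EinX hi => [j hj|k hk].
    by apply: NinSW; rewrite sizeN.
  have := @span_catr _ (Sset q m.+1) (Wset q m.+1) k; rewrite sizeW nthW //=; apply => //.
Qed.
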